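(* Let $\xi\in\mathbb{D}=\{z\in\mathbb{C}:|z|<1\}$ with $\xi\neq 0$, and let $z\in\mathbb{D}\setminus\{\xi\}$. Put $b(z,\xi)=\dfrac{\bar\xi(\xi-z)}{1-z\bar\xi}$ and $A(z,\xi)=\dfrac{1-|\xi|^2}{1-z\bar\xi}$. Then $$|\arg b(z,\xi)|\le \pi\min\bigl\{|A(z,\xi)|,\,1\bigr\}.$$
   Context: Here $\arg w$ denotes the value of the argument of $w\neq 0$ lying in $[-\pi,\pi)$ (so it is the principal argument, except that on the negative real axis the value $-\pi$ is taken). *)

(* Defs.v *)
From Stdlib Require Import Reals.
From Coquelicot Require Export Coquelicot.
Open Scope R_scope.

(* Argument of w <> 0 with values in [-PI, PI): the principal argument,
   except that on the negative real axis the value -PI is taken.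
   For Im w > 0: acos (Re w / |w|) in (0, PI);
   for Im w <= 0: - acos (Re w / |w|) in [-PI, 0]  (= -PI iff w is negative real). *)
Definition carg (w : C) : R :=
  if Rlt_dec 0 (Im w) then acos (Re w / Cmod w) else - acos (Re w / Cmod w).

Definition bfun (z xi : C) : C := (Cconj xi * (xi - z) / (1 - z * Cconj xi))%C.
Definition Afun (z xi : C) : C := ((1 - (Cmod xi)^2) / (1 - z * Cconj xi))%C.

(* Main.v *)
Require Import Defs.
From Stdlib Require Import Reals.
From Coquelicot Require Import Coquelicot.
From Stdlib Require Import Lra Psatz.
Open Scope R_scope.

Lemma jordan_lite t : 0 <= t <= PI/2 -> t <= PI * sin t.
Proof.
  intros [H0 H1].
  assert (Hpi : PI <= 4) by exact PI_4.
  assert (Hpi3 : 3/2 < PI/2) by exact PI2_3_2.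
  assert (Hs : sin_approx t 1 <= sin t).
  { apply (sin_bound t 0); lra. }
  assert (E : sin_approx t 1 = t - t^3/6).
  { unfold sin_approx, sin_term. simpl. field. }
  rewrite E in Hs.
  assert (Ht2 : t^2 <= (PI/2)^2) by nra.
  assert (Hk : PI - PI^3/24 - 1 >= 0) by nra.
  assert (Hk2 : PI * (t - t^3/6) - t = t * (PI - PI * t^2/6 - 1)) by field.
  assert (0 <= t * (PI - PI * t^2/6 - 1)).
  { apply Rmult_le_pos; [lra|]. nra. }
  nra.
Qed.

Lemma main_small (p q : R) :
  Cmod (p, q) < 1 -> Rabs (carg (1 - (p, q))%C) <= PI * Cmod (p, q).
Proof.
  intros Ha.
  unfold carg.
  set (w := (1 - (p, q))%C).
  assert (Rw : Re w = 1 - p) by (unfold w; simpl; ring).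
  assert (Iw : Im w = - q) by (unfold w; simpl; ring).
  assert (Cw : Cmod w = sqrt ((1-p)^2 + q^2)).
  { unfold Cmod. change (fst w) with (Re w). change (snd w) with (Im w). rewrite Rw, Iw. f_equal. ring. }
  rewrite Rw, Cw.
  set (a := Cmod (p, q)) in *.
  assert (Ea : a * a = p^2 + q^2).
  { unfold a, Cmod. simpl fst; simpl snd. rewrite sqrt_sqrt; [reflexivity|apply Rplus_le_le_0_compat; apply pow2_ge_0]. }
  assert (a0 : 0 <= a) by apply Cmod_ge_0.
  set (r := sqrt ((1-p)^2 + q^2)).
  assert (Er : r * r = (1-p)^2 + q^2).
  { unfold r. rewrite sqrt_sqrt. reflexivity. apply Rplus_le_le_0_compat; apply pow2_ge_0. }
  assert (r0 : 0 <= r) by (unfold r; apply sqrt_pos).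
  assert (pa : p < 1) by nra.
  assert (rpos : 0 < r) by nra.
  assert (xr : 1 - p <= r) by nra.
  set (u := (1 - p) / r).
  assert (u0 : 0 < u) by (unfold u; apply Rdiv_lt_0_compat; lra).
  assert (u1 : u <= 1).
  { assert (ur : u * r = 1 - p) by (unfold u; field; lra). nra. }
  assert (Hth : acos u <= PI * a).
  { set (th := acos u).
    assert (B : 0 <= th <= PI) by apply acos_bound.
    assert (Hc : cos th = u) by (apply cos_acos; lra).
    assert (Hth2 : th <= PI/2).
    { destruct (Rle_dec th (PI/2)) as [h|h]; auto.
      destruct (Rle_lt_or_eq_dec th PI (proj2 B)) as [h2|h2].
      - assert (cos th < 0) by (apply cos_lt_0; lra). lra.
      - rewrite h2, cos_PI in Hc. lra. }
    assert (Hsn : sin th = sqrt (1 - u²)) by (apply sin_acos; lra).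
    assert (s0 : 0 <= sin th) by (rewrite Hsn; apply sqrt_pos).
    assert (Es : sin th * sin th = 1 - u * u).
    { rewrite Hsn. rewrite sqrt_sqrt. unfold Rsqr; ring. unfold Rsqr; nra. }
    assert (Eu : 1 - u * u = q^2 / (r*r)).
    { assert (ur : u * r = 1 - p) by (unfold u; field; lra). apply (Rmult_eq_reg_r (r*r)); [|nra]. unfold Rdiv. rewrite Rmult_assoc, Rinv_l by nra. rewrite Rmult_1_r. replace ((1-u*u)*(r*r)) with (r*r - (u*r)*(u*r)) by ring. rewrite ur, Er. ring. }
    assert (Hq : q^2 <= (a*a) * (r*r)).
    { rewrite Ea, Er. replace ((p^2+q^2)*((1-p)^2+q^2)) with ((p - (p^2+q^2))^2 + q^2) by ring. assert (h0 := pow2_ge_0 (p - (p^2+q^2))). lra. }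
    assert (Hs2 : sin th * sin th <= a * a).
    { rewrite Es, Eu. apply (Rmult_le_reg_r (r*r)); [nra|].
      unfold Rdiv. rewrite Rmult_assoc, Rinv_l; nra. }
    assert (sin th <= a) by nra.
    assert (th <= PI * sin th) by (apply jordan_lite; split; lra).
    assert (0 < PI) by exact PI_RGT_0. nra. }
  assert (Ab := acos_bound u).
  fold u.
  destruct (Rlt_dec 0 (Im w)).
  - rewrite Rabs_pos_eq; lra.
  - rewrite Rabs_Ropp, Rabs_pos_eq; lra.
Qed.

Lemma carg_le_PI w : Rabs (carg w) <= PI.
Proof.
  unfold carg. assert (B := acos_bound (Re w / Cmod w)).
  destruct (Rlt_dec 0 (Im w)).
  - rewrite Rabs_pos_eq; lra.
  - rewrite Rabs_Ropp, Rabs_pos_eq; lra.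
Qed.

Theorem lemma1 (xi z : C) :
  Cmod xi < 1 -> xi <> 0%C -> Cmod z < 1 -> z <> xi ->
  Rabs (carg (bfun z xi)) <= PI * Rmin (Cmod (Afun z xi)) 1.
Proof.
  intros Hxi Hxi0 Hz Hzxi.
  assert (Hd : (1 - z * Cconj xi)%C <> 0%C).
  { intro E. assert (E2 : (z * Cconj xi)%C = 1%C).
    { replace (z * Cconj xi)%C with (1 - (1 - z * Cconj xi))%C by ring. rewrite E. ring. }
    assert (Cmod (z * Cconj xi) = 1) by (rewrite E2; apply Cmod_1).
    rewrite Cmod_mult, Cmod_conj in H.
    assert (0 <= Cmod z) by apply Cmod_ge_0.
    assert (0 <= Cmod xi) by apply Cmod_ge_0. nra. }
  assert (Eb : bfun z xi = (1 - Afun z xi)%C).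
  { unfold bfun, Afun.
    assert (Em : Cpow (RtoC (Cmod xi)) 2 = (xi * Cconj xi)%C).
    { rewrite <- Cmod2_conj. simpl. rewrite RtoC_mult, RtoC_mult. ring. }
    rewrite Em. field. exact Hd. }
  rewrite Eb.
  destruct (Afun z xi) as [p q].
  destruct (Rlt_dec (Cmod (p, q)) 1) as [h|h].
  - rewrite Rmin_left by lra. apply main_small; exact h.
  - rewrite Rmin_right by lra. rewrite Rmult_1_r. apply carg_le_PI.
Qed.
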